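(* Let $(R,\mathfrak m,k)$ be a Noetherian local ring, $j\ge2$, and $M$ a finitely generated $R$-module with $\operatorname{pd}_RM=2$ satisfying the $(SW_j)$ condition. Write $\beta_i=\beta_i^R(M)$. Then for all $t=0,1,\dots,\operatorname{pd}_R\mathcal S_j(M)$: (a) if $j\ge t$, $\beta_t^R(\mathcal S_j(M))=\sum_{r=0}^{\lfloor t/2\rfloor}\binom{\beta_2+r-1}{r}\binom{\beta_1}{t-2r}\binom{\beta_0+j-t+r-1}{j-t+r}$; (b) if $j<t$, $\beta_t^R(\mathcal S_j(M))=\sum_{r=t-j}^{\min\{j,\lfloor t/2\rfloor\}}\binom{\beta_2+r-1}{r}\binom{\beta_1}{t-2r}\binom{\beta_0+j-t+r-1}{j-t+r}$.
   Context: $\beta_i^R(N)$ is the $i$-th Betti number (rank of the $i$-th module in a minimal free resolution of $N$). $\mathcal S_j(M)$ is the $j$-th graded component of the symmetric algebra $\mathcal S_R(M)$. For a free module $F$ of finite rank, $D_a(F)$ is the $a$-th divided power (symmetric tensors in $F^{\otimes a}$; free with basis the divided power monomials $f_1^{(c_1)}\cdots f_r^{(c_r)}$, $\sum c_l=a$), $\Lambda^aF$ the $a$-th exterior power. For a finite free resolution $\mathbf F_\bullet:0\to F_p\xrightarrow{\phi_p}\cdots\xrightarrow{\phi_1}F_0$ of $M$, the complex $\mathcal S_j\mathbf F_\bullet$ has $(\mathcal S_j\mathbf F_\bullet)_t=\bigoplus D_{a_0}F_0\otimes\Lambda^{a_1}F_1\otimes D_{a_2}F_2\otimes\cdots$,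 summed over $(a_0,\dots,a_p)\in\mathbb N^{p+1}$ with $\sum a_i=j$, $\sum ia_i=t$; the differential maps the summand indexed by $(a_0,\dots,a_p)$ only to summands indexed by $(a_0,\dots,a_i+1,a_{i+1}-1,\dots,a_p)$, by $(-1)^{a_0+2a_1+\cdots+(i+1)a_i}$ times identity on other factors tensored with: for $i$ odd, $f_1^{(c_1)}\cdots f_r^{(c_r)}\otimes v\mapsto\sum_lf_1^{(c_1)}\cdots f_l^{(c_l-1)}\cdots f_r^{(c_r)}\otimes\phi_{i+1}(f_l)\wedge v$; for $i$ even, $f_{l_1}\wedge\cdots\wedge f_{l_a}\otimes w\mapsto\sum_s(-1)^sf_{l_1}\wedge\cdots\widehat{f_{l_s}}\cdots\wedge f_{l_a}\otimes\phi_{i+1}(f_{l_s})\cup w$, where $g_m\cup g_1^{(c_1)}\cdots g_n^{(c_n)}$ raises $c_m$ by one. Standing assumption: the characteristic of $R$ is such that $\mathcal S_j\mathbf F_\bullet$ is a complex (e.g. all integers $2\le m\le jp$ are units in $R$). A free resolution is minimal if $\operatorname{Im}\phi_i\subseteq\mathfrak mF_{i-1}$. $M$ satisfies the $(SW_j)$ condition if, for a finite minimal free resolution $\mathbf F_\bullet$ of $M$, $\mathcal S_j\mathbf F_\bullet$ is a finite free resolution of $\mathcal S_j(M)$. *)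

(* Defs.v *)
From HB Require Import structures.
From mathcomp Require Import all_boot all_order fingroup perm all_algebra.
From Stdlib Require Import ClassicalEpsilon.
Set Implicit Arguments.
Unset Strict Implicit.
Unset Printing Implicit Defensive.
Import Order.TTheory GRing.Theory.
Local Open Scope ring_scope.

Section Defs.
Variable R : comNzRingType.

Definition is_unit (x : R) : Prop := exists y, x * y = 1.
Definition in_max (x : R) : Prop := ~ is_unit x.
(* local ring (R is nontrivial as a comNzRingType): the non-units are
   closed under addition, i.e. they form the unique maximal ideal. *)
Definition local_ring : Prop :=
  forall x y, in_max x -> in_max y -> in_max (x + y).

Definition is_ideal (I : R -> Prop) : Prop :=
  I 0 /\ (forall x y, I x -> I y -> I (x + y)) /\ (forall r x, I x -> I (r * x)).

Definition noetherian : Prop :=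
  forall I, is_ideal I -> exists s : seq R,
    forall x, I x <-> exists c : nat -> R, x = \sum_(i < size s) c i * s`_i.

Definition fin_gen (M : lmodType R) : Prop :=
  exists s : seq M, forall v : M, exists c : nat -> R,
    v = \sum_(i < size s) c i *: s`_i.

(* A free resolution  ... -> F_2 -> F_1 -> F_0 -> N -> 0.
   F i is a finite type indexing a basis of the i-th free module
   (rank #|F i|); d i x y is the coefficient of the basis vector y of F_i in
   the image of the basis vector x of F_{i+1}; e x is the image of the basis
   vector x of F_0 in N. *)
Definition is_resolution (N : lmodType R) (F : nat -> finType)
    (d : forall i, F i.+1 -> F i -> R) (e : F 0%N -> N) : Prop :=
  (forall n : N, exists v : F 0%N -> R, n = \sum_x v x *: e x) /\
  (forall v : F 0%N -> R, \sum_x v x *: e x = 0 <->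
      exists w : F 1%N -> R, forall y, v y = \sum_x w x * d 0%N x y) /\
  (forall i (v : F i.+1 -> R), (forall z, \sum_y v y * d i y z = 0) <->
      exists w : F i.+2 -> R, forall y, v y = \sum_x w x * d i.+1 x y).

Definition is_minimal (F : nat -> finType) (d : forall i, F i.+1 -> F i -> R)
  : Prop := forall i x y, in_max (d i x y).

Definition length_le (F : nat -> finType) (n : nat) : Prop :=
  forall i, (n < i)%N -> #|F i| = 0%N.

Definition betti (N : lmodType R) (i : nat) : nat :=
  epsilon (inhabits 0%N) (fun n => exists F d e,
    @is_resolution N F d e /\ is_minimal d /\ #|F i| = n).

Definition is_pd (N : lmodType R) (n : nat) : Prop :=
  (exists F d e, @is_resolution N F d e /\ length_le F n) /\
  (forall m, (exists F d e, @is_resolution N F d e /\ length_le F m) ->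
     (n <= m)%N).

Definition ffset (M : lmodType R) j (f : {ffun 'I_j -> M}) (i : 'I_j) (w : M)
  : {ffun 'I_j -> M} := [ffun k => if k == i then w else f k].

Definition sym_multilinear (M P : lmodType R) j (g : {ffun 'I_j -> M} -> P)
  : Prop :=
  (forall (f : {ffun 'I_j -> M}) i (a : R) (u v : M),
     g (ffset f i (a *: u + v)) = a *: g (ffset f i u) + g (ffset f i v)) /\
  (forall (f : {ffun 'I_j -> M}) (s : 'S_j), g [ffun k => f (s k)] = g f).

Definition lin (P Q : lmodType R) (h : P -> Q) : Prop :=
  forall (a : R) (x y : P), h (a *: x + y) = a *: h x + h y.

Definition is_sym_power (j : nat) (M N : lmodType R)
    (sigma : {ffun 'I_j -> M} -> N) : Prop :=
  sym_multilinear sigma /\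
  forall (P : lmodType R) (g : {ffun 'I_j -> M} -> P), sym_multilinear g ->
    exists h : N -> P, lin h /\ (forall f, h (sigma f) = g f) /\
      forall h' : N -> P, lin h' -> (forall f, h' (sigma f) = g f) ->
        forall x, h' x = h x.

Section SjComplex.
Variables (F0 F1 F2 : finType) (phi1 : F1 -> F0 -> R) (phi2 : F2 -> F1 -> R).
Variable j : nat.

(* basis element of D_{a0}F0 (x) Lambda^{a1}F1 (x) D_{a2}F2:
   exponent vector c0, subset S0, exponent vector c2 *)
Definition sj_base : finType :=
  ({ffun F0 -> 'I_j.+1} * {set F1} * {ffun F2 -> 'I_j.+1})%type.

Definition mdeg (T : finType) (c : {ffun T -> 'I_j.+1}) : nat :=
  (\sum_x (c x : nat))%N.

Definition sj_ok (t : nat) (x : sj_base) : bool :=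
  (mdeg x.1.1 + #|x.1.2| + mdeg x.2 == j)%N &&
  (#|x.1.2| + (mdeg x.2).*2 == t)%N.

(* basis of (S_j F)_t *)
Definition SjIdx (t : nat) : finType := {x : sj_base | sj_ok t x}.

(* wedge basis ordered by enum_rank *)
Definition nbefore (S0 : {set F1}) (l : F1) : nat :=
  #|[set k in S0 | (enum_rank k < enum_rank l)%N]|.

(* the differential (S_j F)_{t+1} -> (S_j F)_t, coefficient of y in d(x) *)
Definition SjD (t : nat) (x : SjIdx t.+1) (y : SjIdx t) : R :=
  let: (c0, S0, c2) := val x in
  let: (c0', S', c2') := val y in
  (* move i = 0 : Lambda^{a1}F1 (x) D_{a0}F0 -> Lambda^{a1-1}F1 (x) D_{a0+1}F0 *)
  let dA := \sum_(l in S0) \sum_(m : F0)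
      ((c2' == c2) && (S' == S0 :\ l) &&
        [forall z, (c0' z : nat) == (c0 z + (z == m))%N])%:R *
      ((-1) ^+ (nbefore S0 l).+1 * phi1 l m) in
  (* move i = 1 : D_{a2}F2 (x) Lambda^{a1}F1 -> D_{a2-1}F2 (x) Lambda^{a1+1}F1 *)
  let dB := \sum_(l : F2) \sum_(m : F1 | m \notin S0)
      ((c0' == c0) && (S' == m |: S0) &&
        [forall z, ((c2' z : nat) + (z == l))%N == c2 z])%:R *
      ((-1) ^+ (nbefore S0 m) * phi2 l m) in
  (-1) ^+ (mdeg c0) * dA + (-1) ^+ (mdeg c0 + #|S0|) * dB.
End SjComplex.

(* The (SW_j) condition for M with j-th symmetric power N: some finite minimal
   free resolution F of M (of length <= 2 = pd M) is such that S_j F is a free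
   resolution of N. *)
Definition SW (j : nat) (M N : lmodType R) : Prop :=
  exists (F : nat -> finType) (d : forall i, F i.+1 -> F i -> R)
         (e : F 0%N -> M),
    is_resolution d e /\ is_minimal d /\ length_le F 2 /\
    exists e' : SjIdx (F 0%N) (F 1%N) (F 2%N) j 0 -> N,
      @is_resolution N (SjIdx (F 0%N) (F 1%N) (F 2%N) j)
        (@SjD (F 0%N) (F 1%N) (F 2%N) (d 0%N) (d 1%N) j) e'.

End Defs.

(* Main.v *)
Require Import Defs.
From HB Require Import structures.
From mathcomp Require Import all_boot all_order fingroup perm all_algebra.
From Stdlib Require Import ClassicalEpsilon FunctionalExtensionality.
From mathcomp Require Import ring zify.
Unset Implicit Arguments.
Unset Strict Implicit.
Unset Printing Implicit Defensive.
Import Order.TTheory GRing.Theory.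
Local Open Scope ring_scope.

Section Local.
Variable R : comNzRingType.
Hypothesis loc : local_ring R.

Lemma unit1 : is_unit (1 : R). Proof. by exists 1; rewrite mulr1. Qed.

Lemma in_max0 : in_max (0 : R).
Proof. by case=> y; rewrite mul0r => /eqP; rewrite eq_sym oner_eq0. Qed.

Lemma in_maxMl (x y : R) : in_max y -> in_max (x * y).
Proof. by rewrite /in_max /is_unit => H [z Hz]; apply: H; exists (x * z); rewrite mulrCA mulrA. Qed.

Lemma in_maxMr (x y : R) : in_max x -> in_max (x * y).
Proof. by rewrite mulrC; apply: in_maxMl. Qed.

Lemma in_maxD (x y : R) : in_max x -> in_max y -> in_max (x + y).
Proof. exact: loc. Qed.

Lemma in_max_sum (I : Type) (r : seq I) (P : pred I) (F : I -> R) :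
  (forall i, P i -> in_max (F i)) -> in_max (\sum_(i <- r | P i) F i).
Proof.
move=> H; apply: (big_ind (fun x => in_max x)).
- exact: in_max0.
- exact: in_maxD.
- exact: H.
Qed.

Lemma in_max_m1 : ~ in_max (-1 : R).
Proof. move=> H; have H2 := in_maxMl (-1) (-1) H; apply: H2; exists 1; by rewrite mulN1r opprK mulr1. Qed.

Lemma det_1C n (C : 'M[R]_n) : (forall a b, in_max (C a b)) ->
  in_max (\det (1%:M + C) - 1).
Proof.
move=> HC; rewrite /determinant (bigD1 1%g) //= odd_perm1 expr0 mul1r.
rewrite addrAC.
apply: in_maxD.
  apply: (big_ind (fun y => in_max (y - 1))).
  - by rewrite subrr; apply: in_max0.
  - move=> y z Hy Hz.
    have -> : y * z - 1 = (y - 1) * (z - 1) + ((y - 1) + (z - 1)).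
      by ring.
    by apply: in_maxD; [apply: in_maxMr | apply: in_maxD].
  - move=> i _; rewrite perm1 !mxE eqxx addrAC subrr add0r; exact: HC.
apply: in_max_sum => s Hs; apply: in_maxMl.
case: (pickP (fun i => s i != i)) => [i Hi | H]; last first.
  by exfalso; move/negP: Hs; apply; apply/eqP/permP => i; rewrite perm1; apply/eqP; move: (H i) => /negbFE.
rewrite (bigD1 i) //=; apply: in_maxMr.
by rewrite !mxE eq_sym (negbTE Hi) add0r; apply: HC.
Qed.

Lemma det_wide n m (A : 'M[R]_(n, m)) (B : 'M_(m, n)) : (m < n)%N ->
  \det (A *m B) = 0.
Proof.
move=> lt; have [k hk] : exists k, n = (m + k.+1)%N.
  by exists (n - m).-1; rewrite prednK ?subn_gt0 // subnKC // ltnW.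
subst n.
have -> : A *m B = row_mx A (0 : 'M_(m + k.+1, k.+1)) *m col_mx B 0 by rewrite mul_row_col mul0mx addr0.
rewrite det_mulmx (expand_det_col _ (rshift m ord0)) big1 ?mul0r // => i _.
by rewrite row_mxEr mxE mul0r.
Qed.

Lemma no_wide n m (A : 'M[R]_(n, m)) (B : 'M_(m, n)) (C : 'M_n) :
  (forall a b, in_max (C a b)) -> A *m B = 1%:M + C -> (n <= m)%N.
Proof.
move=> HC E; rewrite leqNgt; apply/negP => lt.
have := det_1C n C HC; rewrite -E det_wide // sub0r; exact: in_max_m1.
Qed.
End Local.
Definition mm (R : comNzRingType) (A B C : finType) (X : A -> B -> R) (Y : B -> C -> R)
  : A -> C -> R := fun a c => \sum_b X a b * Y b c.
Definition dlt (R : comNzRingType) (A : finType) : A -> A -> R := fun a b => (a == b)%:R.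
Arguments dlt {R A}.
Arguments mm {R A B C}.

Definition cyc (R : comNzRingType) (N : lmodType R) (F : nat -> finType)
  (d : forall i, F i.+1 -> F i -> R) (e : F 0%N -> N) (i : nat) (A : finType)
  : (A -> F i -> R) -> Prop :=
  match i as i0 return (A -> F i0 -> R) -> Prop with
  | 0 => fun phi => forall a, \sum_y phi a y *: e y = 0
  | i'.+1 => fun phi => forall a z, \sum_y phi a y * d i' y z = 0
  end.
Arguments cyc {R N F} d e {i A}.

Section MM.
Variable R : comNzRingType.
Implicit Types A B C D : finType.

Lemma mmA A B C D (X : A -> B -> R) (Y : B -> C -> R) (Z : C -> D -> R) :
  mm (mm X Y) Z = mm X (mm Y Z).
Proof.
apply: functional_extensionality => a; apply: functional_extensionality => c.
rewrite /mm; under eq_bigr do rewrite big_distrl /=.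
rewrite exchange_big; apply: eq_bigr => b _; rewrite big_distrr.
by apply: eq_bigr => k _ /=; rewrite mulrA.
Qed.

Lemma mm_dltr A B (X : A -> B -> R) : mm X dlt = X.
Proof.
apply: functional_extensionality => a; apply: functional_extensionality => c.
rewrite /mm /dlt (bigD1 c) //= eqxx mulr1 big1 ?addr0 // => b /negbTE ->.
by rewrite mulr0.
Qed.

Lemma mm_dltl A B (X : A -> B -> R) : mm dlt X = X.
Proof.
apply: functional_extensionality => a; apply: functional_extensionality => c.
rewrite /mm /dlt (bigD1 a) //= eqxx mul1r big1 ?addr0 // => b.
by rewrite eq_sym => /negbTE ->; rewrite mul0r.
Qed.

Lemma mm0l A B C (Y : B -> C -> R) : mm (fun (_ : A) _ => 0) Y = fun _ _ => 0.
Proof.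
apply: functional_extensionality => a; apply: functional_extensionality => c.
by rewrite /mm big1 // => b _; rewrite mul0r.
Qed.

Lemma mmBl A B C (X Y : A -> B -> R) (Z : B -> C -> R) :
  mm (fun a b => X a b - Y a b) Z = fun a c => mm X Z a c - mm Y Z a c.
Proof.
apply: functional_extensionality => a; apply: functional_extensionality => c.
by rewrite /mm -sumrB; apply: eq_bigr => b _; rewrite mulrBl.
Qed.

Lemma mmBr A B C (X : A -> B -> R) (Y Z : B -> C -> R) :
  mm X (fun a b => Y a b - Z a b) = fun a c => mm X Y a c - mm X Z a c.
Proof.
apply: functional_extensionality => a; apply: functional_extensionality => c.
by rewrite /mm -sumrB; apply: eq_bigr => b _; rewrite mulrBr.
Qed.

Lemma sum_mm_scale (M : lmodType R) A B C (X : A -> B -> R) (Y : B -> C -> R)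
   (v : C -> M) a :
  \sum_z mm X Y a z *: v z = \sum_y X a y *: \sum_z Y y z *: v z.
Proof.
rewrite /mm; under eq_bigr do rewrite scaler_suml.
rewrite exchange_big; apply: eq_bigr => y _; rewrite scaler_sumr.
by apply: eq_bigr => z _; rewrite scalerA.
Qed.

Lemma sum_dlt_scale (M : lmodType R) A (v : A -> M) a :
  \sum_z dlt a z *: v z = v a.
Proof.
rewrite /dlt (bigD1 a) //= eqxx scale1r big1 ?addr0 // => b.
by rewrite eq_sym => /negbTE ->; rewrite scale0r.
Qed.

Lemma fchoice A (B : Type) (b0 : B) (P : A -> B -> Prop) :
  (forall a, exists w, P a w) -> exists f : A -> B, forall a, P a (f a).
Proof.
move=> H; exists (fun a => epsilon (inhabits b0) (P a)) => a.
exact: epsilon_spec.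
Qed.

Section Res.
Variables (N : lmodType R) (F : nat -> finType) (d : forall i, F i.+1 -> F i -> R)
  (e : F 0%N -> N).
Hypothesis H : is_resolution d e.

Lemma lift_res i A (phi : A -> F i -> R) : cyc d e phi ->
  exists psi : A -> F i.+1 -> R, phi = mm psi (d i).
Proof.
case: H => _ [H1 H2]; case: i phi => [|i] phi /= Hc.
  have Hex : forall a, exists w : F 1%N -> R,
     forall y, phi a y = \sum_x w x * d 0%N x y.
    move=> a; have [w Hw] := (H1 (phi a)).1 (Hc a).
    by exists w.
  have [psi Hpsi] := fchoice _ _ (fun _ => 0) _ Hex.
  by exists psi; do 2 apply: functional_extensionality => ?; apply: Hpsi.
have Hex : forall a, exists w : F i.+2 -> R,
   forall y, phi a y = \sum_x w x * d i.+1 x y.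
  move=> a; have [w Hw] := (H2 i (phi a)).1 (Hc a).
  by exists w.
have [psi Hpsi] := fchoice _ _ (fun _ => 0) _ Hex.
by exists psi; do 2 apply: functional_extensionality => ?; apply: Hpsi.
Qed.

Lemma bd_cyc i A (psi : A -> F i.+1 -> R) : cyc d e (mm psi (d i)).
Proof.
case: H => _ [H1 H2]; case: i psi => [|i] psi /=.
  by move=> a; apply/(H1 _).2; exists (psi a).
by move=> a; apply/(H2 _ _).2; exists (psi a).
Qed.

Lemma dd0 x : \sum_y d 0%N x y *: e y = 0.
Proof. by have := bd_cyc 0 (F 1%N) dlt x; rewrite mm_dltl. Qed.

Lemma ddS i : mm (d i.+1) (d i) = fun _ _ => 0.
Proof.
apply: functional_extensionality => a; apply: functional_extensionality => c.
by have := bd_cyc i.+1 (F i.+2) dlt a c; rewrite mm_dltl.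
Qed.

Lemma surj_res (A : finType) (v : A -> N) : exists f : A -> F 0%N -> R,
  forall a, v a = \sum_y f a y *: e y.
Proof. case: H => H0 _; apply: (fchoice _ _ (fun _ => 0) (fun a f => v a = \sum_y f y *: e y)) => a; exact: H0. Qed.
End Res.
End MM.
Section Uniq.
Variables (R : comNzRingType) (loc : local_ring R) (N : lmodType R)
  (F G : nat -> finType)
  (d : forall i, F i.+1 -> F i -> R) (e : F 0%N -> N)
  (dg : forall i, G i.+1 -> G i -> R) (eg : G 0%N -> N).
Hypotheses (HF : is_resolution d e) (HG : is_resolution dg eg)
  (mF : is_minimal d) (mG : is_minimal dg).

Definition cc i (f : F i -> G i -> R) (g : G i -> F i -> R) : F i -> F i -> R :=
  fun x z => mm f g x z - dlt x z.

Definition Inv i := exists (f : F i -> G i -> R) (g : G i -> F i -> R)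
  (K : F i -> F i -> R),
  cyc dg eg (mm (d i) f) /\ cyc d e (mm (dg i) g) /\ cyc d e K /\
  (forall x z, in_max (cc i f g x z - K x z)) /\ mm (d i) K = mm (d i) (cc i f g).

Lemma Inv0 : Inv 0.
Proof.
have [f Hf] := surj_res _ N G dg eg HG (F 0%N) e.
have [g Hg] := surj_res _ N F d e HF (G 0%N) eg.
exists f, g, (cc 0 f g); split; [|split; [|split; [|split]]] => //=.
- move=> a; rewrite sum_mm_scale.
  rewrite (eq_bigr (fun y => d 0%N a y *: e y)); first exact: (dd0 _ _ _ _ _ HF).
  by move=> y _; rewrite Hf.
- move=> a; rewrite sum_mm_scale.
  rewrite (eq_bigr (fun y => dg 0%N a y *: eg y)); first exact: (dd0 _ _ _ _ _ HG).
  by move=> y _; rewrite Hg.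
- move=> a; rewrite /cc.
  under eq_bigr do rewrite scalerBl.
  rewrite sumrB sum_mm_scale sum_dlt_scale.
  rewrite (eq_bigr (fun y => f a y *: eg y)); first by rewrite -Hf subrr.
  by move=> y _; rewrite Hg.
- by move=> x z; rewrite subrr; apply: in_max0.
Qed.

Lemma min_mm i (A : finType) (h : F i -> A -> R) x z : in_max (mm (d i) h x z).
Proof. by rewrite /mm; apply: (in_max_sum R loc) => y Hy; apply: in_maxMr; apply: mF. Qed.

Lemma InvS i : Inv i -> Inv i.+1.
Proof.
move=> [f [g [K [c1 [c2 [c3 [c4 c5]]]]]]].
have [f' Hf'] := lift_res _ N G dg eg HG i (F i.+1) _ c1.
have [g' Hg'] := lift_res _ N F d e HF i (G i.+1) _ c2.
have [h Hh] := lift_res _ N F d e HF i (F i) _ c3.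
exists f', g', (fun x z => cc i.+1 f' g' x z - mm (d i) h x z).
split; [|split; [|split; [|split]]].
- move=> a z /=.
  change (mm (mm (d i.+1) f') (dg i) a z = 0).
  by rewrite mmA -Hf' -mmA (ddS _ _ _ _ _ HF) mm0l.
- move=> a z /=.
  change (mm (mm (dg i.+1) g') (d i) a z = 0).
  by rewrite mmA -Hg' -mmA (ddS _ _ _ _ _ HG) mm0l.
- move=> a z /=.
  change (mm (fun x z => cc i.+1 f' g' x z - mm (d i) h x z) (d i) a z = 0).
  rewrite mmBl /cc mmBl mm_dltl mmA -Hg' -mmA -Hf' mmA mmA -Hh c5 /cc mmBr mm_dltr.
  by rewrite subrr.
- move=> x z; rewrite opprB addrC subrK; exact: min_mm.
- rewrite mmBr -mmA (ddS _ _ _ _ _ HF) mm0l.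
  do 2 apply: functional_extensionality => ?; by rewrite subr0.
Qed.

Lemma Inv_all i : Inv i.
Proof. by elim: i => [|i IH]; [apply: Inv0 | apply: InvS]. Qed.

Lemma cc_max i : exists f g, forall x z, in_max (cc i f g x z).
Proof.
have [f [g [K [_ [_ [c3 [c4 _]]]]]]] := Inv_all i.
have [h Hh] := lift_res _ N F d e HF i (F i) _ c3.
exists f, g => x z.
have -> : cc i f g x z = (cc i f g x z - K x z) + K x z by rewrite subrK.
apply: (in_maxD R loc) => //; rewrite Hh /mm.
by apply: (in_max_sum R loc) => y Hy; apply: in_maxMl; apply: mF.
Qed.

Lemma card_le i : (#|F i| <= #|G i|)%N.
Proof.
have [f [g Hc]] := cc_max i.
pose A : 'M[R]_(#|F i|, #|G i|) := \matrix_(a, b) f (enum_val a) (enum_val b).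
pose B : 'M[R]_(#|G i|, #|F i|) := \matrix_(a, b) g (enum_val a) (enum_val b).
pose C : 'M[R]_(#|F i|) := \matrix_(a, b) cc i f g (enum_val a) (enum_val b).
apply: (no_wide R loc _ _ A B C).
  by move=> a b; rewrite mxE.
apply/matrixP => a b; rewrite !mxE /cc /dlt.
rewrite (inj_eq enum_val_inj) addrC subrK /mm.
rewrite (big_enum_val (fun y => f (enum_val a) y * g y (enum_val b))).
by apply: eq_bigr => k _; rewrite !mxE.
Qed.
End Uniq.

Lemma betti_eq (R : comNzRingType) (loc : local_ring R) (N : lmodType R)
  (F : nat -> finType) (d : forall i, F i.+1 -> F i -> R) (e : F 0%N -> N) :
  is_resolution d e -> is_minimal d -> forall i, betti N i = #|F i|.
Proof.
move=> HF mF i; rewrite /betti.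
set P := (fun n => _).
have ex : exists n, P n by exists #|F i|, F, d, e.
have [G [dg [eg [HG [mG <-]]]]] := epsilon_spec (inhabits 0%N) P ex.
apply/eqP; rewrite eqn_leq.
by rewrite (card_le _ loc _ _ _ _ _ _ _ HG HF mG) (card_le _ loc _ _ _ _ _ _ _ HF HG mF).
Qed.
Section Count.
Local Open Scope nat_scope.
Lemma cop n a : (0 < n)%N ->
  #|[set t : n.-tuple 'I_a.+1 | \sum_(i <- t) i == a]| = 'C(n.-1 + a, a).
Proof.
case: n => [|m] //= _.
by rewrite card_ord_partitions -[in RHS](bin_sub (leq_addl m a)) addnK.
Qed.

Definition cnt (T : finType) (j a : nat) : nat :=
  #|[set c : {ffun T -> 'I_j.+1} | (mdeg c == a)%N]|.

Lemma le_mdeg (T : finType) j (c : {ffun T -> 'I_j.+1}) x : (c x <= mdeg c)%N.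
Proof. by rewrite /mdeg (bigD1 x) //= leq_addr. Qed.

Lemma cnt_eq (T : finType) j a : (a <= j)%N -> cnt T j a = 'C(#|T| + a - 1, a).
Proof.
move=> leaj.
have [T0 | Tpos] := posnP #|T|.
  rewrite T0 add0n /cnt.
  have md0 : forall c : {ffun T -> 'I_j.+1}, mdeg c = 0%N.
    by move=> c; rewrite /mdeg big_pred0 // => x; apply/negP => _; move: (card0_eq T0 x).
  case: a leaj => [|a] leaj.
    rewrite bin0 (_ : [set c | _] = setT); last by apply/setP => c; rewrite !inE md0.
    by rewrite cardsT card_ffun T0 expn0.
  rewrite subn1 /= bin_small // .
  by apply: eq_card0 => c; rewrite inE md0.
have lt : (a < a.+1)%N by [].
have laj : (a.+1 <= j.+1)%N by [].
pose h (t : #|T|.-tuple 'I_a.+1) : {ffun T -> 'I_j.+1} :=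
  [ffun x => widen_ord laj (tnth t (enum_rank x))].
pose g (c : {ffun T -> 'I_j.+1}) : #|T|.-tuple 'I_a.+1 :=
  [tuple inord (c (enum_val i)) | i < #|T|].
have mdh : forall t, mdeg (h t) = (\sum_(i <- t) i)%N.
  move=> t; rewrite big_tuple /mdeg.
  rewrite (eq_bigl (fun x => x \in T)) // big_enum_val.
  by apply: eq_bigr => i _; rewrite ffunE /= enum_valK.
rewrite -{1}(prednK Tpos) addSn subn1 /= -(cop _ a Tpos) /cnt -!sum1dep_card.
rewrite (reindex h) /=; last first.
  exists g => [c | c].
    rewrite inE mdh => _; apply: eq_from_tnth => i.
    by rewrite tnth_mktuple ffunE /= enum_valK inord_val.
  rewrite inE => /eqP Hc; apply/ffunP => x; rewrite !ffunE; apply: val_inj => /=.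
  rewrite tnth_mktuple enum_rankK inordK // ltnS -Hc; exact: le_mdeg.
by apply: eq_bigl => t; rewrite mdh.
Qed.
End Count.
Section Count2.
Local Open Scope nat_scope.

Lemma card_sum (T : finType) (P : pred T) : #|[set x | P x]| = \sum_x (P x : nat).
Proof.
by rewrite -sum1dep_card big_mkcond /=; apply: eq_bigr => x _; case: (P x).
Qed.

Lemma sum_by_deg (T : finType) j (H : nat -> nat) K :
  (forall r, K <= r -> H r = 0) ->
  \sum_(c : {ffun T -> 'I_j.+1}) H (mdeg c) = \sum_(r < K) H r * cnt T j r.
Proof.
move=> HK.
under [RHS]eq_bigr do rewrite /cnt card_sum big_distrr /=.
rewrite exchange_big /=; apply: eq_bigr => c _.
have [lt | ge] := ltnP (mdeg c) K.
  rewrite (bigD1 (Ordinal lt)) //= eqxx muln1 big1 ?addn0 // => r Hr.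
  rewrite (_ : (mdeg c == r) = false) ?muln0 //; apply/negbTE.
  by apply: contra Hr => /eqP E; apply/eqP/val_inj; rewrite /= E.
rewrite HK // big1 // => r _.
rewrite (_ : (mdeg c == r) = false) ?muln0 //; apply/negbTE.
by apply/eqP => E; move: (ltn_ord r); rewrite -E ltnNge ge.
Qed.

Lemma ok_iff a s r j t : ((a + s + r == j) && (s + r.*2 == t)) =
  [&& (r.*2 <= t) && (t - r <= j), s == t - r.*2 & a == j + r - t].
Proof.
rewrite -!muln2.
apply/idP/idP => [/andP[/eqP H1 /eqP H2] | /and3P[/andP[H1 H2] /eqP H3 /eqP H4]].
  by apply/and3P; split; [apply/andP; split|apply/eqP|apply/eqP]; lia.
by apply/andP; split; apply/eqP; lia.
Qed.

Lemma card_SjIdx (F0 F1 F2 : finType) j t :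
  #|SjIdx F0 F1 F2 j t| = \sum_(r < t./2.+1)
    (if t - r <= j then cnt F2 j r * 'C(#|F1|, t - r.*2) * cnt F0 j (j + r - t)
     else 0).
Proof.
rewrite card_sig.
have -> : #|[pred x : sj_base F0 F1 F2 j | sj_ok t x]| = \sum_(x : sj_base F0 F1 F2 j) (sj_ok t x : nat).
  by rewrite -card_sum; apply: eq_card => x; rewrite inE.
have -> : \sum_(x : sj_base F0 F1 F2 j) (sj_ok t x : nat) =
  \sum_(c0 : {ffun F0 -> 'I_j.+1}) \sum_(S : {set F1}) \sum_(c2 : {ffun F2 -> 'I_j.+1})
     (sj_ok t (c0, S, c2) : nat).
  by rewrite pair_bigA pair_bigA /=; apply: eq_bigr => [[[? ?] ?]] _.
rewrite exchange_big /=.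
under eq_bigr => c0 _ do rewrite exchange_big /=.
rewrite exchange_big /=.
pose H r := if (r.*2 <= t) && (t - r <= j)
            then 'C(#|F1|, t - r.*2) * cnt F0 j (j + r - t) else 0.
transitivity (\sum_(c2 : {ffun F2 -> 'I_j.+1}) H (mdeg c2)).
  apply: eq_bigr => c2 _; rewrite /H.
  case: ifP => Hc.
    transitivity (\sum_(S : {set F1}) \sum_(c0 : {ffun F0 -> 'I_j.+1})
       ((#|S| == t - (mdeg c2).*2) * (mdeg c0 == j + mdeg c2 - t))).
      apply: eq_bigr => S _; apply: eq_bigr => c0 _.
      by rewrite /sj_ok /= ok_iff Hc /=; case: (_ == _); case: (_ == _).
    under eq_bigr => S _ do rewrite -big_distrr /=.
    by rewrite -big_distrl /= -card_sum card_draws -card_sum.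
  rewrite big1 // => S _; rewrite big1 // => c0 _.
  by rewrite /sj_ok /= ok_iff Hc.
rewrite (sum_by_deg F2 j H t./2.+1); last first.
  move=> r Hr; rewrite /H; case: ifP => // /andP[Ht _].
  by move: Hr; rewrite ltnNge geq_half_double Ht.
apply: eq_bigr => r _; rewrite /H.
have -> : r.*2 <= t by rewrite -geq_half_double -ltnS ltn_ord.
by case: (t - r <= j) => //=; ring.
Qed.
End Count2.
Lemma SjD_min (R : comNzRingType) (loc : local_ring R) (F0 F1 F2 : finType)
  (phi1 : F1 -> F0 -> R) (phi2 : F2 -> F1 -> R) j :
  (forall x y, in_max (phi1 x y)) -> (forall x y, in_max (phi2 x y)) ->
  is_minimal (@SjD R F0 F1 F2 phi1 phi2 j).
Proof.
move=> H1 H2 i [[[c0 S0] c2] ?] [[[c0' S'] c2'] ?] /=.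
rewrite /SjD /=.
apply: (in_maxD R loc); apply: in_maxMl; apply: (in_max_sum R loc) => l _;
  apply: (in_max_sum R loc) => m _; apply: in_maxMl; apply: in_maxMl; [apply: H1 | apply: H2].
Qed.

Theorem corollary5p4 (R : comNzRingType) (j : nat) (M N : lmodType R)
    (sigma : {ffun 'I_j -> M} -> N) :
  noetherian R -> local_ring R -> (2 <= j)%N -> fin_gen M ->
  is_pd M 2 -> is_sym_power sigma -> SW j M N ->
  forall p : nat, is_pd N p -> forall t : nat, (t <= p)%N ->
  let b0 := betti M 0 in let b1 := betti M 1 in let b2 := betti M 2 in
  let term := fun r : nat =>
    ('C(b2 + r - 1, r) * 'C(b1, t - r.*2) * 'C(b0 + (j + r - t) - 1, j + r - t))%N in
  betti N t =
    (if (t <= j)%N then \sum_(0 <= r < t./2.+1) term r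
     else \sum_(t - j <= r < (minn j t./2).+1) term r)%N.
Proof.
move=> _ loc _ _ _ _ [F [d [e [HF [mF [_ [e' HS]]]]]]] p _ t _ b0 b1 b2 term.
have mS := SjD_min R loc _ _ _ (d 0%N) (d 1%N) j (mF 0%N) (mF 1%N).
rewrite /term /b0 /b1 /b2 (betti_eq R loc N _ _ e' HS mS) !(betti_eq R loc M F d e HF mF).
rewrite card_SjIdx.
have key : forall r : 'I_(t./2.+1), (t - r <= j)%N ->
   (cnt (F 2%N) j r * 'C(#|F 1%N|, t - r.*2) * cnt (F 0%N) j (j + r - t) =
   'C(#|F 2%N| + r - 1, r) * 'C(#|F 1%N|, t - r.*2) *
     'C(#|F 0%N| + (j + r - t) - 1, j + r - t))%N.
  move=> r Hr; have := ltn_ord r; rewrite ltnS geq_half_double => H2.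
  by rewrite !cnt_eq //; lia.
case: ifP => Htj.
  rewrite big_mkord; apply: eq_bigr => r _.
  have Hr : (t - r <= j)%N by lia.
  by rewrite Hr key.
rewrite (big_nat_widen _ _ (t./2.+1)); last by rewrite ltnS geq_minr.
rewrite (big_nat_widenl _ 0) // big_mkord.
rewrite [RHS]big_mkcond; apply: eq_bigr => r _.
have := ltn_ord r; rewrite ltnS => H2.
have H3 := H2; rewrite geq_half_double in H3.
have H4 : (t./2.*2 <= t)%N by rewrite -geq_half_double.
have -> : (true && (r < (minn j t./2).+1) && (t - j <= r))%N = (t - r <= j)%N.
  rewrite /=; apply/idP/idP => [/andP[Ha Hb] | Ha]; first by lia.
  by apply/andP; split; lia.
by case: ifP => // Hr; rewrite key.
Qed.
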